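(* Let $X$ and $Y$ be nonempty sets with $\operatorname{card} Y\ge 3$, and let $\mathcal P$ be a nonempty collection of subsets of $X$. Define the binary relation $\hat{\mathcal P}$ on $Y^X$ by declaring $f\,\hat{\mathcal P}\,g$ if and only if $\{x\in X\mid f(x)=g(x)\}\in\mathcal P$. Then $\mathcal P$ is a filter on $X$ if and only if $\hat{\mathcal P}$ is a nontrivial equivalence relation on $Y^X$.
   Context: Let $X$ be a nonempty set. A nonempty collection $\mathcal P$ of subsets of $X$ is a filter on $X$ if it satisfies: (F0) for every $n\ge 1$ and all $A_1,\dots,A_n\in\mathcal P$, $A_1\cap\cdots\cap A_n\neq\emptyset$; (F1) if $A\supseteq B$ and $B\in\mathcal P$ then $A\in\mathcal P$; (F2) for all $A,B\in\mathcal P$ there is $C\in\mathcal P$ with $C\subseteq A\cap B$. $Y^X$ denotes the set of all functions $X\to Y$. An equivalence relation on a set $S$ is called nontrivial if it is not the total relation $S\times S$ (i.e. not all pairs of elements are related). *)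

(* Defs.v *)
From Stdlib Require Import List Relation_Definitions.
Import ListNotations.

Definition is_filter {X : Type} (P : (X -> Prop) -> Prop) : Prop :=
  (exists A, P A) /\
  (forall l : list (X -> Prop), l <> [] -> Forall P l ->
     exists x, Forall (fun A => A x) l) /\
  (forall A B : X -> Prop, (forall x, B x -> A x) -> P B -> P A) /\
  (forall A B : X -> Prop, P A -> P B ->
     exists C, P C /\ (forall x, C x -> A x /\ B x)).

Definition hatP {X Y : Type} (P : (X -> Prop) -> Prop) : relation (X -> Y) :=
  fun f g => P (fun x => f x = g x).

Definition nontrivial_rel {S : Type} (R : relation S) : Prop :=
  ~ (forall a b : S, R a b).

(* Main.v *)
Require Import Defs.
From Stdlib Require Import List Relation_Definitions.
From Stdlib Require Import Classical ClassicalEpsilon FunctionalExtensionality PropExtensionality.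
Import ListNotations.

Lemma P_ext {X : Type} (P : (X -> Prop) -> Prop) (A B : X -> Prop) :
  (forall x, A x <-> B x) -> P A -> P B.
Proof.
  intros H HA. replace B with A; auto.
  apply functional_extensionality; intro x; apply propositional_extensionality; auto.
Qed.

Theorem mainTheorem1 (X Y : Type) (hX : inhabited X)
  (hY : exists y1 y2 y3 : Y, y1 <> y2 /\ y1 <> y3 /\ y2 <> y3)
  (P : (X -> Prop) -> Prop) (hP : exists A, P A) :
  is_filter P <->
  (equivalence (X -> Y) (hatP P) /\ nontrivial_rel (@hatP X Y P)).
Proof.
  destruct hY as (y1 & y2 & y3 & h12 & h13 & h23).
  split.
  - intros (Hne & F0 & F1 & F2). split.
    + split.
      * intro f. destruct Hne as [A HA]. unfold hatP.
        apply (F1 _ A); auto.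
      * intros f g h Hfg Hgh. unfold hatP in *.
        destruct (F2 _ _ Hfg Hgh) as (C & HC & HCi).
        apply (F1 _ C); auto. intros x Hx. destruct (HCi x Hx). congruence.
      * intros f g Hfg. unfold hatP in *. apply (F1 _ _ (fun x H => eq_sym H) Hfg).
    + intro Hall. specialize (Hall (fun _ => y1) (fun _ => y2)). unfold hatP in Hall.
      destruct (F0 [fun _ : X => y1 = y2]) as [x Hx].
      * discriminate.
      * constructor; auto.
      * inversion Hx; auto.
  - intros [[Hrefl Htrans Hsym] Hnt].
    unfold reflexive, transitive, symmetric, hatP in *.
    assert (F1 : forall A B : X -> Prop, (forall x, B x -> A x) -> P B -> P A).
    { intros A B HBA HB.
      set (f := fun _ : X => y1).
      set (g := fun x => if excluded_middle_informative (A x) then y1 else y2).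
      set (h := fun x => if excluded_middle_informative (B x) then y1 else y3).
      assert (P (fun x => f x = h x)).
      { apply (P_ext P B); auto. intro x. unfold f, h.
        destruct (excluded_middle_informative (B x)); split; intros; auto; try contradiction; congruence. }
      assert (P (fun x => h x = g x)).
      { apply (P_ext P B); auto. intro x. unfold g, h.
        destruct (excluded_middle_informative (B x)); destruct (excluded_middle_informative (A x));
          split; intros; auto; try congruence. exfalso; auto. }
      apply (P_ext P (fun x => f x = g x)).
      - intro x. unfold f, g. destruct (excluded_middle_informative (A x)); split; intros; auto; congruence.
      - eapply Htrans; eauto. }
    assert (Meet : forall A B, P A -> P B -> P (fun x => A x /\ B x)).
    { intros A B HA HB.
      set (f := fun _ : X => y1).
      set (g := fun x => if excluded_middle_informative (A x) then y1 else y2).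
      set (h := fun x => if excluded_middle_informative (B x) then y1 else y3).
      assert (P (fun x => f x = g x)).
      { apply (P_ext P A); auto. intro x. unfold f, g.
        destruct (excluded_middle_informative (A x)); split; intros; auto; try contradiction; congruence. }
      assert (P (fun x => f x = h x)).
      { apply (P_ext P B); auto. intro x. unfold f, h.
        destruct (excluded_middle_informative (B x)); split; intros; auto; try contradiction; congruence. }
      apply (P_ext P (fun x => g x = h x)).
      - intro x. unfold g, h. destruct (excluded_middle_informative (A x));
          destruct (excluded_middle_informative (B x)); split; intros; try tauto; congruence.
      - eapply Htrans; [apply Hsym|]; eauto. }
    assert (NE : forall C, P C -> exists x, C x).
    { intros C HC. destruct (classic (exists x, C x)) as [H|H]; auto.
      exfalso. apply Hnt. intros a b.
      apply (F1 _ C); auto. intros x Hx. exfalso. apply H. eauto. }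
    assert (Lst : forall l : list (X -> Prop), l <> [] -> Forall P l ->
       P (fun x => Forall (fun A => A x) l)).
    { induction l as [|a l IH]; intros Hl HF; [congruence|].
      inversion HF; subst. destruct l as [|b l'].
      - apply (P_ext P a); auto. intro x; split; intro H.
        + constructor; auto.
        + inversion H; auto.
      - assert (HL := IH ltac:(discriminate) H2).
        apply (P_ext P (fun x => a x /\ Forall (fun A => A x) (b :: l'))).
        + intro x; split; intro H.
          * destruct H; constructor; auto.
          * inversion H; auto.
        + apply Meet; auto. }
    split; [exact hP|]. split; [|split].
    + intros l Hl HF. apply NE. apply Lst; auto.
    + exact F1.
    + intros A B HA HB. exists (fun x => A x /\ B x). split; auto.
Qed.
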